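(* Every non-abelian free group of finite rank has exponential automorphic growth.
   Context: For a finitely generated group $G$ with finite generating set $\Sigma$, the automorphic growth function sends $n$ to the number of $\operatorname{Aut}(G)$-orbits of $G$ containing an element of word length at most $n$ with respect to $\Sigma$. For non-decreasing non-zero $f,g\colon\mathbb{N}\to\mathbb{N}$ write $f\preccurlyeq g$ if there is $\lambda\in\mathbb{N}\setminus\{0\}$ with $f(n)\le\lambda g(\lambda n+\lambda)+\lambda$ for all $n$, and $f\sim g$ if $f\preccurlyeq g$ and $g\preccurlyeq f$. Exponential automorphic growth means the automorphic growth function is $\sim$-equivalent to $n\mapsto 2^n$; this is independent of the generating set. *)

(* Defs.v *)
From mathcomp Require Import all_boot.
Set Implicit Arguments. Unset Strict Implicit. Unset Printing Implicit Defensive.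

(* A letter (i, b) stands for the generator x_i if b = false and x_i^-1 if b = true. *)
Definition letter := (nat * bool)%type.

Definition inv_letter (l : letter) : letter := (l.1, ~~ l.2).

Fixpoint reducedb (w : seq letter) : bool :=
  match w with
  | l :: ((l' :: _) as w') => (l' != inv_letter l) && reducedb w'
  | _ => true
  end.

Definition valid (r : nat) (w : seq letter) : bool :=
  reducedb w && all (fun l => l.1 < r) w.

Definition cons_red (l : letter) (w : seq letter) : seq letter :=
  match w with
  | l' :: w' => if l' == inv_letter l then w' else l :: w
  | [::] => [:: l]
  end.

Definition reduce (w : seq letter) : seq letter := foldr cons_red [::] w.

Definition FG (r : nat) := {w : seq letter | valid r w}.

Definition fg_one (r : nat) : FG r := exist _ [::] (erefl true).

Definition fg_mul (r : nat) (x y : FG r) : FG r :=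
  insubd (fg_one r) (reduce (val x ++ val y)).

Definition fg_gen (r : nat) (l : letter) : FG r := insubd (fg_one r) [:: l].

Definition fg_eval (r : nat) (s : seq letter) : FG r :=
  foldr (fun l acc => fg_mul (fg_gen r l) acc) (fg_one r) s.

Definition in_ball (r n : nat) (x : FG r) : Prop :=
  exists s : seq letter, size s <= n /\ all (fun l => l.1 < r) s /\ fg_eval r s = x.

Definition is_aut (r : nat) (phi : FG r -> FG r) : Prop :=
  bijective phi /\ forall x y, phi (fg_mul x y) = fg_mul (phi x) (phi y).

Definition same_orbit (r : nat) (x y : FG r) : Prop :=
  exists phi, is_aut phi /\ phi x = y.

(* k is the number of Aut(F_r)-orbits meeting the ball of radius n:
   L is a list of pairwise inequivalent elements of the ball of length k
   such that every element of the ball lies in the orbit of one of them. *)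
Definition orbit_count (r n k : nat) : Prop :=
  exists L : seq (FG r),
    [/\ size L = k,
        (forall x, x \in L -> in_ball n x),
        (forall i j, i < j < k -> ~ same_orbit (nth (fg_one r) L i) (nth (fg_one r) L j))
      & (forall x, in_ball n x -> exists2 y, y \in L & same_orbit x y)].

Definition preceq (f g : nat -> nat) : Prop :=
  exists lam : nat, 0 < lam /\ forall n, f n <= lam * g (lam * n + lam) + lam.

Definition growth_equiv (f g : nat -> nat) : Prop := preceq f g /\ preceq g f.

Definition exp_aut_growth (r : nat) : Prop :=
  (exists f : nat -> nat, forall n, orbit_count r n (f n)) /\
  (forall f : nat -> nat, (forall n, orbit_count r n (f n)) ->
     growth_equiv f (fun n => 2 ^ n)).

(* Main.v *)
From Stdlib Require Import ClassicalEpsilon.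
Require Import Defs.
From mathcomp Require Import all_boot all_algebra.
From mathcomp Require Import ring zify.
Set Implicit Arguments. Unset Strict Implicit. Unset Printing Implicit Defensive.
Import GRing.Theory Num.Theory.


Lemma reducedb_cons_red l w : reducedb w -> reducedb (cons_red l w).
Proof.
case: w => [|l' w] //= H.
case: ifP => [_|/negbT ne] /=; last by rewrite ne H.
by case: w H => [|l'' w] //= /andP[].
Qed.

Lemma reducedb_reduce w : reducedb (reduce w).
Proof. by elim: w => //= l w IH; apply: reducedb_cons_red. Qed.

Lemma all_cons_red (P : pred letter) l w : P l -> all P w -> all P (cons_red l w).
Proof.
move=> Hl; case: w => [|l' w] /=; first by rewrite Hl.
move=> /andP[H1 H2].
by case: ifP => _ //=; rewrite Hl H1 H2.
Qed.

Lemma all_reduce (P : pred letter) w : all P w -> all P (reduce w).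
Proof. by elim: w => //= l w IH /andP[H1 H2]; apply: all_cons_red => //; apply: IH. Qed.

Lemma valid_reduce r w : all (fun l => l.1 < r) w -> valid r (reduce w).
Proof. by move=> H; rewrite /valid reducedb_reduce all_reduce. Qed.

Lemma reducedb_tail l w : reducedb (l :: w) -> reducedb w.
Proof. by case: w => // l' w /= /andP[]. Qed.

Lemma reduce_id w : reducedb w -> reduce w = w.
Proof.
elim: w => //= l w IH H.
rewrite IH; last exact: reducedb_tail H.
case: w H {IH} => [|l' w] //= /andP[ne _].
by rewrite (negbTE ne).
Qed.

Lemma val_fg_mul r (x y : FG r) : val (fg_mul x y) = reduce (val x ++ val y).
Proof.
rewrite /fg_mul val_insubd valid_reduce //.
case: x y => [x /andP[_ Hx]] [y /andP[_ Hy]] /=.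
by rewrite all_cat Hx Hy.
Qed.

Lemma val_fg_gen r l : l.1 < r -> val (fg_gen r l) = [:: l].
Proof. by move=> H; rewrite /fg_gen val_insubd /valid /= H. Qed.

Lemma fg_eval_val r (x : FG r) : fg_eval r (val x) = x.
Proof.
apply: val_inj.
case: x => w /= Hw.
elim: w Hw => //= l w IH /andP[Hr /andP[Hl Ha]].
have Hw : valid r w by apply/andP; split; [exact: reducedb_tail Hr | exact: Ha].
rewrite val_fg_mul val_fg_gen //.
have -> : val (fg_eval r w) = w by exact: IH Hw.
rewrite /= reduce_id ?(reducedb_tail Hr) //.
by case: w {IH Hw Ha} Hr => //= l' w /andP[ne _]; rewrite (negbTE ne).
Qed.

Lemma fg_mul_one r : fg_mul (fg_one r) (fg_one r) = fg_one r.
Proof. by apply: val_inj; rewrite val_fg_mul. Qed.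

Lemma fg_gen_inv r i : i < r -> fg_mul (fg_gen r (i, true)) (fg_gen r (i, false)) = fg_one r.
Proof.
move=> H; apply: val_inj; rewrite val_fg_mul !val_fg_gen //=.
by rewrite /inv_letter /= eqxx.
Qed.


Section GDef.
Local Open Scope ring_scope.

Definition G := (rat * rat)%type.
Definition mulG (x y : G) : G := (x.1 * y.1, x.2 + x.1 * y.2).
Definition oneG : G := (1, 0).
Definition invG (x : G) : G := (x.1^-1, - (x.1^-1 * x.2)).

Lemma mulGA x y z : mulG x (mulG y z) = mulG (mulG x y) z.
Proof. case: x y z => [a b] [c d] [e f]; rewrite /mulG /=; congr pair; ring. Qed.
Lemma mul1G x : mulG oneG x = x.
Proof. case: x => a b; rewrite /mulG /=; congr pair; ring. Qed.
Lemma mulG1 x : mulG x oneG = x.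
Proof. case: x => a b; rewrite /mulG /=; congr pair; ring. Qed.
Lemma mulGV x : x.1 != 0 -> mulG x (invG x) = oneG.
Proof. case: x => a b /= H; rewrite /mulG /oneG /=; congr pair; field; done. Qed.
Lemma mulVG x : x.1 != 0 -> mulG (invG x) x = oneG.
Proof. case: x => a b /= H; rewrite /mulG /oneG /=; congr pair; field; done. Qed.
Lemma idemG y : y.1 != 0 -> y = mulG y y -> y = oneG.
Proof.
case: y => a b /= Ha [E1 E2].
have a1 : a = 1.
  by apply: (mulfI Ha); rewrite mulr1 -E1.
move: E2; rewrite a1 mul1r => E2.
have -> : b = 0 by apply: (addrI b); rewrite addr0 -E2.
by [].
Qed.
Lemma invG_uniq y z : z.1 != 0 -> mulG y z = oneG -> y = invG z.
Proof.
move=> Hz E; rewrite -[y]mulG1 -(mulGV Hz) mulGA E mul1G //.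
Qed.

Definition letval (g : nat -> G) (l : letter) : G :=
  if l.2 then invG (g l.1) else g l.1.
Definition evw (g : nat -> G) (s : seq letter) : G :=
  foldr (fun l acc => mulG (letval g l) acc) oneG s.
Definition ev r (g : nat -> G) (x : FG r) : G := evw g (val x).

Lemma evw_cat g u v : evw g (u ++ v) = mulG (evw g u) (evw g v).
Proof. by elim: u => [|l u IH] /=; rewrite ?mul1G // IH mulGA. Qed.

Definition nz (g : nat -> G) := forall i, (g i).1 != 0.

Lemma evw_cons_red g l w : nz g -> evw g (cons_red l w) = mulG (letval g l) (evw g w).
Proof.
move=> Hg; case: w => [|l' w] //=.
case: ifP => [/eqP -> | _] //=.
rewrite mulGA; case: l => i [] /=; rewrite /letval /=.
  by rewrite mulVG // mul1G.
by rewrite mulGV // mul1G.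
Qed.

Lemma evw_reduce g w : nz g -> evw g (reduce w) = evw g w.
Proof. by move=> Hg; elim: w => //= l w IH; rewrite evw_cons_red // IH. Qed.

Lemma ev_mul r g (x y : FG r) : nz g -> ev g (fg_mul x y) = mulG (ev g x) (ev g y).
Proof. by move=> Hg; rewrite /ev val_fg_mul evw_reduce // evw_cat. Qed.

Lemma ev_gen r g l : (l.1 < r)%N -> ev g (fg_gen r l) = letval g l.
Proof. by move=> H; rewrite /ev val_fg_gen //= mulG1. Qed.

Lemma ev_fg_eval r g s : nz g -> all (fun l => (l.1 < r)%N) s -> ev g (fg_eval r s) = evw g s.
Proof.
move=> Hg; elim: s => [|l s IH] //= /andP[H1 H2].
by rewrite ev_mul // ev_gen // IH.
Qed.

Lemma hom_unique r (e : FG r -> G) :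
  (forall x y, e (fg_mul x y) = mulG (e x) (e y)) ->
  (forall x, (e x).1 != 0) ->
  forall x, e x = ev (fun i => e (fg_gen r (i, false))) x.
Proof.
move=> Hm Hnz x.
set g' := fun i => _.
have e1 : e (fg_one r) = oneG.
  by apply: idemG => //; rewrite -Hm fg_mul_one.
rewrite -{1}(fg_eval_val x) /ev.
case: x => w /= /andP[_].
elim: w => [|l w IH] /= ; first by rewrite e1.
move=> /andP[Hl Ha]; rewrite Hm IH //; congr mulG.
case: l Hl => i [] /= Hi; rewrite /letval /=; last by [].
apply: invG_uniq; first exact: Hnz.
by rewrite -Hm fg_gen_inv.
Qed.

End GDef.


Section Good.
Local Open Scope ring_scope.

Definition pow2 (a : rat) := exists k : int, a = 2%:R ^ k.
Definition dyadic (b : rat) := exists (M : nat) (z : int), b * 2%:R ^+ M = z%:~R.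
Definition Hgood (x : G) := pow2 x.1 /\ dyadic x.2.

Lemma two_neq0 : (2%:R : rat) != 0. Proof. by []. Qed.

Lemma pow2_neq0 a : pow2 a -> a != 0.
Proof. by case=> k ->; apply: expfz_neq0. Qed.
Lemma pow2_mul a b : pow2 a -> pow2 b -> pow2 (a * b).
Proof. by case=> k -> [l ->]; exists (k + l); rewrite expfzDr. Qed.
Lemma pow2_inv a : pow2 a -> pow2 a^-1.
Proof. by case=> k ->; exists (- k); rewrite invr_expz. Qed.
Lemma dyadic_add a b : dyadic a -> dyadic b -> dyadic (a + b).
Proof.
case=> M [z Ez] [N [w Ew]]; exists (M + N)%N, (z * 2 ^+ N + w * 2 ^+ M).
rewrite intrD !intrM exprD mulrDl -Ez -Ew !rmorphXn /=; ring.
Qed.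
Lemma dyadic_mul a b : dyadic a -> dyadic b -> dyadic (a * b).
Proof.
case=> M [z Ez] [N [w Ew]]; exists (M + N)%N, (z * w).
rewrite intrM exprD -Ez -Ew; ring.
Qed.
Lemma dyadic_opp a : dyadic a -> dyadic (- a).
Proof. by case=> M [z Ez]; exists M, (- z); rewrite mulNr Ez intrN. Qed.
Lemma pow2_dyadic a : pow2 a -> dyadic a.
Proof.
case=> [[m|m] ->].
  by exists 0%N, (2 ^+ m); rewrite expr0 mulr1 -exprnP rmorphXn.
exists m.+1, 1; rewrite NegzE -invr_expz -exprnP mulVf //.
by rewrite expf_neq0.
Qed.

Lemma Hgood_mul x y : Hgood x -> Hgood y -> Hgood (mulG x y).
Proof.
case=> [p1 d1] [p2 d2]; split; first exact: pow2_mul.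
by apply: dyadic_add => //; apply: dyadic_mul => //; apply: pow2_dyadic.
Qed.
Lemma Hgood_inv x : Hgood x -> Hgood (invG x).
Proof.
case=> [p1 d1]; split; first exact: pow2_inv.
by apply: dyadic_opp; apply: dyadic_mul => //; apply: pow2_dyadic; apply: pow2_inv.
Qed.
Lemma Hgood_one : Hgood oneG.
Proof. by split; [exists 0 | exists 0%N, 0; rewrite mul0r]. Qed.

Definition goodt (g : nat -> G) := forall i, Hgood (g i).

Lemma goodt_nz g : goodt g -> nz g.
Proof. by move=> H i; case: (H i) => /pow2_neq0. Qed.

Lemma evw_good g s : goodt g -> Hgood (evw g s).
Proof.
move=> Hg; elim: s => [|l s IH] /=; first exact: Hgood_one.
apply: Hgood_mul => //; rewrite /letval; case: ifP => _; last exact: Hg.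
exact: Hgood_inv.
Qed.

Definition ImS r (x : FG r) (c : G) := exists g, goodt g /\ ev g x = c.

Lemma Im_aut r (phi : FG r -> FG r) x c : is_aut phi -> ImS (phi x) c -> ImS x c.
Proof.
case=> _ Hphi [g [Hg <-]].
set e := fun y => ev g (phi y).
have He : forall y z, e (fg_mul y z) = mulG (e y) (e z).
  by move=> y z; rewrite /e Hphi ev_mul //; apply: goodt_nz.
have Hnz : forall y, (e y).1 != 0.
  by move=> y; case: (evw_good (val (phi y)) Hg) => /pow2_neq0.
exists (fun i => e (fg_gen r (i, false))); split.
  by move=> i; exact: evw_good.
by rewrite -hom_unique.
Qed.

End Good.

Lemma aut_id r : is_aut (@id (FG r)).
Proof. by split => // ; exists id. Qed.

Lemma aut_inv r (phi : FG r -> FG r) : is_aut phi ->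
  exists psi, is_aut psi /\ forall x, psi (phi x) = x.
Proof.
case=> [[psi K1 K2] H]; exists psi; split => //; split; first by exists phi.
by move=> x y; rewrite -{1}(K2 x) -{1}(K2 y) -H K1.
Qed.

Lemma same_orbit_sym r (x y : FG r) : same_orbit x y -> same_orbit y x.
Proof.
case=> phi [Hphi <-]; case: (aut_inv Hphi) => psi [Hpsi K].
by exists psi.
Qed.

Lemma same_orbit_Im r (x y : FG r) c : same_orbit x y -> (ImS x c <-> ImS y c).
Proof.
move=> Hxy; split => H.
  case: (same_orbit_sym Hxy) => psi [Hpsi E]; rewrite -E in H; exact: Im_aut Hpsi H.
case: Hxy => phi [Hphi E]; apply: (Im_aut Hphi); rewrite E; exact: H.
Qed.


Definition la : letter := (0, false).
Definition lai : letter := (0, true).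
Definition lb : letter := (1, false).
Definition lbi : letter := (1, true).
Definition cw : seq letter := [:: la; lb; lai; lbi].
Definition ciw : seq letter := [:: lb; la; lbi; lai].

Fixpoint Hw (s : seq bool) : seq letter :=
  if s is b :: s' then (if b then cw else [::]) ++ la :: Hw s' ++ [:: lai] else [::].
Fixpoint HIw (s : seq bool) : seq letter :=
  if s is b :: s' then la :: HIw s' ++ lai :: (if b then ciw else [::]) else [::].
Definition Ww (s : seq bool) : seq letter := la :: Hw s ++ lai :: HIw s.

Section Comp.
Local Open Scope ring_scope.

Fixpoint Pq (s : seq bool) (x : rat) : rat :=
  if s is b :: s' then (b%:R) + x * Pq s' x else 0.

Definition tC (g : nat -> G) : rat := (1 - (g 1%N).1) * (g 0%N).2 + ((g 0%N).1 - 1) * (g 1%N).2.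

Lemma evw_cw g : nz g -> evw g cw = (1, tC g).
Proof.
move=> Hg; have h0 := Hg 0%N; have h1 := Hg 1%N.
rewrite /evw /= /letval /= /mulG /invG /oneG /tC /=.
move: h0 h1; case: (g 0%N) => a1 b1; case: (g 1%N) => a2 b2 /= h0 h1.
congr pair; field; by rewrite h0 h1.
Qed.

Lemma evw_ciw g : nz g -> evw g ciw = (1, - tC g).
Proof.
move=> Hg; have h0 := Hg 0%N; have h1 := Hg 1%N.
rewrite /evw /= /letval /= /mulG /invG /oneG /tC /=.
move: h0 h1; case: (g 0%N) => a1 b1; case: (g 1%N) => a2 b2 /= h0 h1.
congr pair; field; by rewrite h0 h1.
Qed.

Lemma conj_a g t : nz g ->
  mulG (letval g la) (mulG (1, t) (letval g lai)) = (1, (g 0%N).1 * t).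
Proof.
move=> Hg; have h0 := Hg 0%N.
rewrite /letval /= /mulG /invG /=.
move: h0; case: (g 0%N) => a1 b1 /= h0.
congr pair; field; done.
Qed.

Lemma evw_Hw g s : nz g -> evw g (Hw s) = (1, Pq s (g 0%N).1 * tC g).
Proof.
move=> Hg; elim: s => [|b s IH] /=; first by rewrite mul0r.
rewrite evw_cat /= evw_cat IH /= (mulG1 (letval g lai)) conj_a //.
case: b; rewrite ?evw_cw //= /mulG /=; congr pair; ring.
Qed.

Lemma evw_HIw g s : nz g -> evw g (HIw s) = (1, - (Pq s (g 0%N).1 * tC g)).
Proof.
move=> Hg; elim: s => [|b s IH] /=; first by rewrite mul0r oppr0.
rewrite evw_cat IH /=.
have -> : mulG (letval g lai) (evw g (if b then ciw else [::])) =
          mulG (letval g lai) (1, - (b%:R * tC g)).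
  by case: b; rewrite ?evw_ciw //= ?mul1r ?mul0r ?oppr0.
rewrite [mulG (1, _) _]mulGA mulGA conj_a // /mulG /=; congr pair; ring.
Qed.

Lemma evw_Ww g s : nz g -> evw g (Ww s) = (1, ((g 0%N).1 - 1) * Pq s (g 0%N).1 * tC g).
Proof.
move=> Hg; rewrite /Ww /= evw_cat evw_Hw //= evw_HIw //.
have h0 := Hg 0%N; rewrite /letval /= /mulG /invG /=.
move: h0; case: (g 0%N) => a1 b1 /= h0.
congr pair; field; done.
Qed.

End Comp.


Fixpoint valn (s : seq bool) (a : nat) : nat :=
  if s is b :: s' then b + a * valn s' a else 0.

Lemma valn_rcons u b a : valn (rcons u b) a = valn u a + b * a ^ (size u).
Proof. elim: u => [|c u IH] /=; first by rewrite muln0 expn0 muln1 addn0. by rewrite IH expnS; lia. Qed.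

Lemma valn_lt2 s : valn s 2 < 2 ^ (size s).
Proof. elim: s => [|b s IH] //=; rewrite expnS; case: b => /=; lia. Qed.

Lemma valn_inj2 s t : size s = size t -> valn s 2 = valn t 2 -> s = t.
Proof.
elim: s t => [|b s IH] [|c t] //= [E] H.
have [bc v] : b = c /\ valn s 2 = valn t 2 by case: b c H => [] [] /=; lia.
by rewrite bc (IH t E v).
Qed.

Lemma valn_ge u a : a ^ (size u) <= valn (rcons u true) a.
Proof. by rewrite valn_rcons mul1n leq_addl. Qed.

Lemma valn_odd s a : ~~ odd a -> odd (valn (true :: s) a).
Proof. by move=> H /=; rewrite oddM (negbTE H). Qed.

Definition fam (u : seq bool) := rcons (true :: u ++ rev u) true.

Lemma fam_rev u : rev (fam u) = fam u.
Proof. by rewrite /fam rev_rcons rev_cons rev_cat revK rcons_cons. Qed.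

Lemma fam_size u : size (fam u) = (size u).*2.+2.
Proof. by rewrite /fam size_rcons /= size_cat size_rev addnn. Qed.

Lemma keyN (s t : seq bool) (m : nat) :
  size s = size t -> (exists s', s = true :: s') -> (exists t', t = rcons t' true) ->
  0 < m -> ((2 ^ m - 1) * valn t (2 ^ m)) %| valn s 2 -> s = t.
Proof.
move=> Est [s' Es] [t' Et] m0 Hd.
set N := valn s 2 in Hd.
have Npos : 0 < N by rewrite /N Es /=.
have Nlt : N < 2 ^ (size t').+1 by rewrite /N -(size_rcons t' true) -Et -Est valn_lt2.
have Tge : (2 ^ m) ^ size t' <= valn t (2 ^ m) by rewrite Et valn_ge.
have XleN := dvdn_leq Npos Hd.
case: m m0 Hd XleN Tge => [|[|m]] // _ Hd XleN Tge.
  rewrite expn1 /= mul1n in Hd XleN Tge.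
  case/dvdnP: Hd => q Eq.
  have q1 : q = 1.
    rewrite expnS in Nlt; move: Eq Nlt Tge Npos; rewrite -/N; nia.
  apply: valn_inj2 => //; rewrite -/N Eq q1 mul1n //.
exfalso.
have h1 : 2 ^ (size t').*2 <= (2 ^ m.+2) ^ size t'.
  by rewrite -expnM leq_pexp2l // -mul2n leq_mul2r ltnS ltn0Sn orbT.
have h2 : 2 ^ (size t') <= 2 ^ (size t').*2 by rewrite leq_pexp2l // -addnn leq_addr.
have h3 : 4 <= 2 ^ m.+2 by exact: (@leq_pexp2l 2 2 m.+2 isT isT).
rewrite expnS in Nlt.
move: XleN Nlt h1 h2 h3 Tge; set A := 2 ^ m.+2; set B := 2 ^ size t'; nia.
Qed.


Section Trans.
Local Open Scope ring_scope.

Lemma Pq_nat s (a : nat) : Pq s a%:R = (valn s a)%:R.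
Proof. by elim: s => [|b s IH] //=; rewrite IH natrD natrM. Qed.

Lemma Pq_rcons u b x : Pq (rcons u b) x = Pq u x + b%:R * x ^+ (size u).
Proof. elim: u => [|c u IH] /=; first by rewrite mulr0 expr0 add0r addr0 mulr1. rewrite IH exprS; ring. Qed.

Lemma Pq_rev s x : x != 0 -> x ^+ (size s) * Pq s x^-1 = x * Pq (rev s) x.
Proof.
move=> Hx; elim: s => [|b s IH] /=; first by rewrite !mulr0.
have IH' : Pq (rev s) x = x^-1 * (x ^+ size s * Pq s x^-1) by rewrite IH; field.
rewrite rev_cons Pq_rcons size_rev IH' exprS; field; done.
Qed.

Lemma int_dvd (X P : nat) (z : int) (sg : bool) :
  (X%:R * z%:~R : rat) = (-1) ^+ sg * P%:R -> (X %| P)%N.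
Proof.
move=> E.
have E' : ((X%:Z * z)%:~R : rat) = (((-1) ^+ sg * P%:Z)%:~R : rat).
  by rewrite !intrM rmorphXn rmorphN rmorph1 -!pmulrn.
move/intr_inj: E' => /(congr1 absz); rewrite abszM abszMsign /= => <-.
exact: dvdn_mulr.
Qed.

Lemma transfer (t : seq bool) (N : nat) (al tau : rat) :
  rev t = t -> pow2 al -> dyadic tau -> (al - 1) * Pq t al * tau = N%:R -> (0 < N)%N ->
  exists m K, (0 < m)%N /\ ((2 ^ m - 1) * valn t (2 ^ m) %| N * 2 ^ K)%N.
Proof.
move=> Hrev [k ->] [M [z Ez]] E Npos.
case: k E => [m|m] E.
  rewrite -exprnP in E.
  case: m E => [|m] E.
    by move: E; rewrite expr0 subrr !mul0r => /eqP; rewrite eq_sym pnatr_eq0 => /eqP N0; rewrite N0 in Npos.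
  exists m.+1, M; split => //.
  apply: (@int_dvd _ _ z false).
  rewrite expr0 mul1r natrM natrB ?expn_gt0 // natrX -Pq_nat natrX -Ez.
  rewrite natrM natrX -E; ring.
set x : rat := 2%:R ^+ m.+1.
have xnz : x != 0 by rewrite expf_neq0.
have Ha : (2%:R : rat) ^ Negz m = x^-1 by rewrite NegzE -invr_expz -exprnP.
rewrite Ha in E.
have HP := Pq_rev t xnz; rewrite Hrev in HP.
have E2 : (x - 1) * Pq t x * tau = - (N%:R * x ^+ size t).
  rewrite -E.
  have -> : Pq t x = x ^+ size t * Pq t x^-1 / x by rewrite HP; field.
  field; done.
exists m.+1, (m.+1 * size t + M)%N; split => //.
apply: (@int_dvd _ _ z true).
rewrite expr1 natrM natrB ?expn_gt0 // natrX -Pq_nat natrX -Ez -/x.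
rewrite natrM natrX exprD exprM -/x [_ * (tau * _)]mulrA E2; ring.
Qed.

End Trans.


Lemma Hw_letters s : all (fun l => l.1 < 2) (Hw s).
Proof. by elim: s => [|b s IH] //=; rewrite all_cat /= all_cat IH; case: b. Qed.
Lemma HIw_letters s : all (fun l => l.1 < 2) (HIw s).
Proof. by elim: s => [|b s IH] //=; rewrite all_cat IH /=; case: b. Qed.
Lemma Ww_letters r s : 2 <= r -> all (fun l => l.1 < r) (Ww s).
Proof.
move=> Hr; apply: (@sub_all _ (fun l : letter => l.1 < 2)).
  by move=> l /= H; apply: leq_trans Hr.
by rewrite /Ww /= all_cat Hw_letters /= HIw_letters.
Qed.
Lemma size_Hw s : size (Hw s) <= 6 * size s.
Proof. elim: s => [|b s IH] //=; rewrite size_cat /= size_cat /=; case: b => /=; lia. Qed.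
Lemma size_HIw s : size (HIw s) <= 6 * size s.
Proof. elim: s => [|b s IH] //=; rewrite size_cat /=; case: b => /=; lia. Qed.
Lemma size_Ww s : size (Ww s) <= 12 * size s + 2.
Proof. rewrite /Ww /= size_cat /=; have := size_Hw s; have := size_HIw s; lia. Qed.

Section ImFam.
Local Open Scope ring_scope.

Definition g0 : nat -> G := fun i => if i == 0%N then (2%:R, 0) else if i == 1%N then (1, 1) else (1, 0).

Lemma g0_good : goodt g0.
Proof.
have d0 : dyadic 0 by exists 0%N, 0; rewrite mul0r.
have d1 : dyadic 1 by exists 0%N, 1; rewrite mul1r.
have p1 : pow2 1 by exists 0.
move=> i; rewrite /g0; case: ifP => _; last case: ifP => _; split => //=.
by exists 1.
Qed.

Lemma Im_pos r s : (2 <= r)%N -> ImS (fg_eval r (Ww s)) (1, (valn s 2)%:R).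
Proof.
move=> Hr; exists g0; split; first exact: g0_good.
rewrite ev_fg_eval ?Ww_letters //; last exact: goodt_nz g0_good.
rewrite evw_Ww; last exact: goodt_nz g0_good.
rewrite /tC /g0 /= -Pq_nat; congr pair; ring.
Qed.

Lemma dyadic1 : dyadic 1. Proof. by exists 0%N, 1; rewrite mul1r. Qed.

Lemma Im_neg r u v : (2 <= r)%N -> size u = size v ->
  ImS (fg_eval r (Ww (fam v))) (1, (valn (fam u) 2)%:R) -> fam u = fam v.
Proof.
move=> Hr Huv [g [Hg E]].
have Hnz := goodt_nz Hg.
rewrite ev_fg_eval ?Ww_letters // evw_Ww // in E.
case: E => E.
have Ht : dyadic (tC g).
  case: (Hg 0%N) => p0 d0; case: (Hg 1%N) => p1 d1.
  rewrite /tC; apply: dyadic_add; apply: dyadic_mul => //.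
    by apply: dyadic_add; [exact: dyadic1 | apply: dyadic_opp; exact: pow2_dyadic].
  by apply: dyadic_add; [exact: pow2_dyadic | apply: dyadic_opp; exact: dyadic1].
have Npos : (0 < valn (fam u) 2)%N by rewrite /fam rcons_cons /=.
case: (Hg 0%N) => p0 _.
have [m [K [m0 Hd]]] := transfer (fam_rev v) p0 Ht E Npos.
set X := ((2 ^ m - 1) * valn (fam v) (2 ^ m))%N in Hd.
have oX : odd X.
  rewrite /X oddM oddB ?expn_gt0 // oddX /= (negbTE (lt0n_neq0 m0)) /=.
  by rewrite add0n oddM oddX (negbTE (lt0n_neq0 m0)).
have cX : coprime X (2 ^ K) by apply: coprimeXr; rewrite coprimen2.
rewrite Gauss_dvdl // in Hd.
apply: (keyN (m := m)) => //.
- by rewrite !fam_size Huv.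
- by exists (rcons (u ++ rev u) true); rewrite /fam rcons_cons.
- by exists (true :: v ++ rev v).
Qed.

End ImFam.


Section Small.
Local Open Scope ring_scope.

Fixpoint net (w : seq letter) : int :=
  if w is l :: w' then (if l.2 then -1 else 1) + net w' else 0.

Lemma net_cons_red l w : net (cons_red l w) = net (l :: w).
Proof.
case: w => [|l' w] //=; case: ifP => [/eqP -> | _] //=.
by case: l => i [] /=; lia.
Qed.
Lemma net_reduce w : net (reduce w) = net w.
Proof. by elim: w => //= l w IH; rewrite net_cons_red /= IH. Qed.
Lemma net_cat u v : net (u ++ v) = net u + net v.
Proof. by elim: u => [|l u IH] /=; [rewrite add0r | rewrite IH addrA]. Qed.
Lemma net_nseq n b : net (nseq n (0%N, b)) = (if b then - n%:Z else n%:Z).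
Proof. elim: n => [|n IH] /=; first by case: b. rewrite IH; move: IH; case: b => /= _; lia. Qed.

Lemma small_shape r w : (r <= 1)%N -> valid r w ->
  exists b, w = nseq (size w) (0%N, b).
Proof.
move=> Hr; elim: w => [|l w IH]; first by exists false.
case/andP=> Hred /= /andP[Hl Ha].
have l0 : l.1 = 0%N by move: Hl Hr; lia.
have [b Eb] : exists b, w = nseq (size w) (0%N, b).
  by apply: IH; apply/andP; split; [exact: reducedb_tail Hred | exact: Ha].
case: l Hred Hl Ha l0 => i c /= Hred _ _ i0; subst i.
case: w Eb Hred {IH} => [|l' w] Eb; first by exists c.
move: Eb => /= [-> Ew] /andP[ne _].
have bc : b = c by move: ne; rewrite /inv_letter /=; case: b c {Ew} => [] [].
by exists c; rewrite /= {1}Ew bc.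
Qed.

Lemma small_net r w1 w2 : (r <= 1)%N -> valid r w1 -> valid r w2 -> net w1 = net w2 -> w1 = w2.
Proof.
move=> Hr V1 V2; case: (small_shape Hr V1) => b1 ->; case: (small_shape Hr V2) => b2 ->.
rewrite !net_nseq; set n1 := size w1; set n2 := size w2.
case: b1; case: b2 => E.
- by have -> : n1 = n2 by lia.
- by have [-> ->] : n1 = 0%N /\ n2 = 0%N by lia.
- by have [-> ->] : n1 = 0%N /\ n2 = 0%N by lia.
- by have -> : n1 = n2 by lia.
Qed.

End Small.

Lemma small_comm r : r <= 1 -> forall x y : FG r, fg_mul x y = fg_mul y x.
Proof.
move=> Hr x y; apply: val_inj.
have V : forall u v : FG r, valid r (val (fg_mul u v)) by move=> u v; exact: valP.
apply: (small_net Hr (V x y) (V y x)).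
rewrite !val_fg_mul !net_reduce !net_cat; apply: GRing.addrC.
Qed.


Definition letters r : seq letter := [seq (i, b) | i <- iota 0 r, b <- [:: false; true]].

Fixpoint words r n : seq (seq letter) :=
  if n is n'.+1 then [::] :: [seq l :: w | l <- letters r, w <- words r n'] else [:: [::]].

Lemma words_complete r n s : size s <= n -> all (fun l => l.1 < r) s -> s \in words r n.
Proof.
elim: n s => [|n IH] [|l s] //= Hs /andP[Hl Ha].
rewrite in_cons; apply/orP; right.
apply/allpairsP; exists (l, s) => /=; split => //; last by apply: IH.
case: l Hl => i b /= Hi; apply/allpairsP; exists (i, b) => /=; split => //.
  by rewrite mem_iota.
by case: b.
Qed.

Lemma words_sound r n s : s \in words r n -> size s <= n /\ all (fun l => l.1 < r) s.
Proof.
elim: n s => [|n IH] s /=; first by rewrite inE => /eqP ->.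
rewrite in_cons => /orP[/eqP -> //|/allpairsP[[l w] /= [Hl Hw ->]]].
case: (IH _ Hw) => H1 H2; split => //=.
rewrite H2 andbT; case/allpairsP: Hl => [[i b] /= [Hi _ ->]].
by rewrite mem_iota in Hi; move: Hi => /andP[_]; rewrite add0n.
Qed.

Lemma size_words r n : size (words r n) <= (r.*2.+1) ^ n.
Proof.
elim: n => [|n IH] //=.
rewrite size_allpairs /letters size_allpairs size_iota /= expnS.
move: IH; set A := (r.*2.+1) ^ n; set B := size (words r n); nia.
Qed.

Definition ballL r n : seq (FG r) := map (fg_eval r) (words r n).

Lemma ballL_in r n x : in_ball n x <-> x \in ballL r n.
Proof.
split.
  by case=> s [Hs [Ha <-]]; apply: map_f; apply: words_complete.
by case/mapP=> s Hs ->; case: (words_sound Hs) => H1 H2; exists s.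
Qed.

Fixpoint greedy r (B : seq (FG r)) : seq (FG r) :=
  if B is x :: B' then
    let K := greedy B' in
    if excluded_middle_informative (exists2 y, y \in K & same_orbit x y) then K else x :: K
  else [::].

Lemma same_orbit_refl r (x : FG r) : same_orbit x x.
Proof. by exists id; split => //; apply: aut_id. Qed.

Lemma greedy_sub r (B : seq (FG r)) y : y \in greedy B -> y \in B.
Proof.
elim: B => [|x B IH] //=; case: excluded_middle_informative => Hc Hy.
  by rewrite in_cons (IH Hy) orbT.
move: Hy; rewrite !in_cons => /orP[->//|/IH ->]; by rewrite orbT.
Qed.

Lemma greedy_cover r (B : seq (FG r)) x : x \in B -> exists2 y, y \in greedy B & same_orbit x y.
Proof.
elim: B => [|z B IH] //=; rewrite in_cons => /orP[/eqP ->|Hx].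
  case: excluded_middle_informative => // Hc.
  by exists z; [rewrite in_cons eqxx | apply: same_orbit_refl].
case: (IH Hx) => y Hy Hxy.
case: excluded_middle_informative => Hc; first by exists y.
by exists y => //; rewrite in_cons Hy orbT.
Qed.

Lemma greedy_sep r (B : seq (FG r)) :
  forall i j, i < j < size (greedy B) ->
    ~ same_orbit (nth (fg_one r) (greedy B) i) (nth (fg_one r) (greedy B) j).
Proof.
elim: B => [|x B IH] /=; first by move=> i j /andP[_]; rewrite ltn0.
case: (excluded_middle_informative (exists2 y, y \in greedy B & same_orbit x y)) => Hn //.
move=> [|i] [|j] //=.
  move=> Hj Hs; apply: Hn; exists (nth (fg_one r) (greedy B) j) => //.
  by apply: mem_nth; move: Hj; rewrite ltnS.
by move=> Hij; apply: IH.
Qed.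

Lemma orbit_count_ex r n : orbit_count r n (size (greedy (ballL r n))).
Proof.
exists (greedy (ballL r n)); split => //.
- by move=> x /greedy_sub /ballL_in.
- exact: greedy_sep.
- by move=> x /ballL_in; apply: greedy_cover.
Qed.

Lemma orbit_count_le r n k : orbit_count r n k -> k <= (r.*2.+1) ^ n.
Proof.
case=> L [<- Hin Hsep _].
have U : uniq L.
  apply/(uniqP (fg_one r)) => i j; rewrite !inE => Hi Hj E.
  case: (ltngtP i j) => // Hij; exfalso.
    by apply: (Hsep i j); [rewrite Hij Hj | rewrite E; apply: same_orbit_refl].
  by apply: (Hsep j i); [rewrite Hij Hi | rewrite E; apply: same_orbit_refl].
apply: leq_trans (size_words r n).
rewrite -(size_map (fg_eval r)).
apply: uniq_leq_size => // x /Hin /ballL_in.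
by [].
Qed.

Lemma fam_inj (u v : seq bool) : size u = size v -> fam u = fam v -> u = v.
Proof.
move=> Hs; rewrite /fam => /rcons_inj [] E.
by move/eqP: E; rewrite eqseq_cat // => /andP[/eqP].
Qed.

Lemma orbit_count_ge r n k : 2 <= r -> orbit_count r (26 * n + 26) k -> 2 ^ n <= k.
Proof.
move=> Hr [L [<- _ _ Hcov]].
set x := fun u : n.-tuple bool => fg_eval r (Ww (fam u)).
have Hball : forall u : n.-tuple bool, in_ball (26 * n + 26) (x u).
  move=> u; exists (Ww (fam u)); split; last by split => //; apply: Ww_letters.
  apply: leq_trans (size_Ww _) _; rewrite fam_size size_tuple; lia.
have ch : forall u : n.-tuple bool, {y | y \in L /\ same_orbit (x u) y}.
  move=> u; apply: constructive_indefinite_description.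
  by case: (Hcov _ (Hball u)) => y Hy Hs; exists y.
set h := fun u => proj1_sig (ch u).
set cu := fun u : n.-tuple bool => ((1 : rat), ((valn (fam u) 2)%:R : rat)) : G.
have hinj : injective h.
  move=> u v E.
  have [Hu1 Hu2] := proj2_sig (ch u).
  have [Hv1 Hv2] := proj2_sig (ch v).
  have P : ImS (x u) (cu u) := Im_pos (fam u) Hr.
  have P1 : ImS (h u) (cu u) by apply/(same_orbit_Im _ Hu2).
  rewrite E in P1.
  have P2 : ImS (x v) (cu u) by apply/(same_orbit_Im _ Hv2).
  have := Im_neg Hr _ P2; rewrite !size_tuple => /(_ erefl) /fam_inj.
  by rewrite !size_tuple => /(_ erefl) /val_inj.
have U : uniq (map h (enum {: n.-tuple bool})) by rewrite map_inj_uniq // enum_uniq.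
have := uniq_leq_size U; rewrite size_map -cardE card_tuple card_bool; apply.
by move=> y /mapP [u _ ->]; case: (proj2_sig (ch u)).
Qed.


Theorem mainTheorem4 (r : nat) :
  ~ (forall x y : FG r, fg_mul x y = fg_mul y x) -> exp_aut_growth r.
Proof.
move=> Hnc.
have Hr : 2 <= r.
  by case: (leqP r 1) => // H; exfalso; apply: Hnc; apply: small_comm.
split; first by exists (fun n => size (greedy (ballL r n))) => n; apply: orbit_count_ex.
move=> f Hf; split.
- exists (r.*2.+1); split => // n.
  apply: leq_trans (orbit_count_le (Hf n)) _.
  have h1 : r.*2.+1 ^ n <= 2 ^ (r.*2.+1 * n).
    rewrite expnM; case: n => [|n] //.
    by rewrite leq_exp2r // ltnW // ltn_expl.
  have h2 : 2 ^ (r.*2.+1 * n) <= 2 ^ (r.*2.+1 * n + r.*2.+1) by rewrite leq_pexp2l // leq_addr.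
  move: h1 h2; set A := 2 ^ _; set B := 2 ^ _; set C := _ ^ n; nia.
- exists 26; split => // n.
  have := orbit_count_ge Hr (Hf (26 * n + 26)); lia.
Qed.
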